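(* Let $(X,d)$ be a complete $\mathrm{CAT}(0)$-space and $f:X\to\mathbb{R}$ a lower semi-continuous quasi-convex function. Assume in addition that either (1) $\inf_X f>-\infty$, or (2) $f$ is $\lambda$-convex for some $\lambda<0$. Then for every $x\in X$ and every $\tau>0$ (with $\tau<(-\lambda)^{-1}$ in case (2)), the set $\mathcal J^f_\tau(x)$ is nonempty. Moreover, in case (2) with $\tau<(-\lambda)^{-1}$, $\mathcal J^f_\tau(x)$ consists of exactly one point.
   Context: A metric space is geodesic if any two points $x,y$ are joined by a curve $\gamma:[0,1]\to X$ with $\gamma(0)=x$, $\gamma(1)=y$, $d(\gamma(s),\gamma(t))=|t-s|d(x,y)$ (a minimal geodesic). A geodesic metric space $(X,d)$ is a $\mathrm{CAT}(0)$-space if for all $x,y,z\in X$ and every minimal geodesic $\gamma$ from $y$ to $z$, $d^2(x,\gamma(s))\le(1-s)d^2(x,y)+sd^2(x,z)-(1-s)sd^2(y,z)$ for all $s\in[0,1]$; then minimal geodesics are unique, denoted $\gamma_{xy}$. $f$ is quasi-convex if $f(\gamma_{xy}(s))\le\max\{f(x),f(y)\}$ for all $x,y\in X$, $s\in(0,1)$; $f$ is $\lambda$-convex if $f(\gamma_{xy}(s))\le(1-s)f(x)+sf(y)-\frac{\lambda}{2}(1-s)sd^2(x,y)$ for all $x,y$, $s\in(0,1)$. For $\tau>0$, $f_\tau(x):=\inf_{z\in X}\{f(z)+d^2(x,z)/(2\tau)\}$ and $\mathcal J^f_\tau(x):=\{z\in X: f(z)+d^2(x,z)/(2\tau)=f_\tau(x)\}$.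 *)

(* Defs.v *)
From Stdlib Require Import Reals Lra.
Open Scope R_scope.

Definition is_metric {X : Type} (d : X -> X -> R) : Prop :=
  (forall x y, 0 <= d x y) /\
  (forall x y, d x y = 0 <-> x = y) /\
  (forall x y, d x y = d y x) /\
  (forall x y z, d x z <= d x y + d y z).

Definition is_cauchy {X : Type} (d : X -> X -> R) (u : nat -> X) : Prop :=
  forall eps, 0 < eps -> exists N, forall m n, (N <= m)%nat -> (N <= n)%nat ->
    d (u m) (u n) < eps.

Definition converges_to {X : Type} (d : X -> X -> R) (u : nat -> X) (l : X) : Prop :=
  forall eps, 0 < eps -> exists N, forall n, (N <= n)%nat -> d (u n) l < eps.

Definition complete {X : Type} (d : X -> X -> R) : Prop :=
  forall u : nat -> X, is_cauchy d u -> exists l, converges_to d u l.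

(* gamma : [0,1] -> X (represented on R, only values on [0,1] matter) is a
   minimal geodesic from x to y. *)
Definition min_geodesic {X : Type} (d : X -> X -> R) (x y : X) (gamma : R -> X) : Prop :=
  gamma 0 = x /\ gamma 1 = y /\
  forall s t, 0 <= s <= 1 -> 0 <= t <= 1 ->
    d (gamma s) (gamma t) = Rabs (t - s) * d x y.

Definition geodesic_space {X : Type} (d : X -> X -> R) : Prop :=
  forall x y, exists gamma, min_geodesic d x y gamma.

Definition CAT0 {X : Type} (d : X -> X -> R) : Prop :=
  geodesic_space d /\
  forall x y z gamma, min_geodesic d y z gamma ->
    forall s, 0 <= s <= 1 ->
      (d x (gamma s))^2 <= (1 - s) * (d x y)^2 + s * (d x z)^2
                           - (1 - s) * s * (d y z)^2.

Definition lsc {X : Type} (d : X -> X -> R) (f : X -> R) : Prop :=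
  forall x eps, 0 < eps -> exists delta, 0 < delta /\
    forall y, d x y < delta -> f x - eps < f y.

(* Quasi-convexity along the (unique, in CAT(0)) minimal geodesics. *)
Definition quasi_convex {X : Type} (d : X -> X -> R) (f : X -> R) : Prop :=
  forall x y gamma, min_geodesic d x y gamma ->
    forall s, 0 < s < 1 -> f (gamma s) <= Rmax (f x) (f y).

Definition lambda_convex {X : Type} (d : X -> X -> R) (lam : R) (f : X -> R) : Prop :=
  forall x y gamma, min_geodesic d x y gamma ->
    forall s, 0 < s < 1 ->
      f (gamma s) <= (1 - s) * f x + s * f y - lam / 2 * (1 - s) * s * (d x y)^2.

Definition J_tau {X : Type} (d : X -> X -> R) (f : X -> R) (tau : R) (x z : X) : Prop :=
  forall w, f z + (d x z)^2 / (2 * tau) <= f w + (d x w)^2 / (2 * tau).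

(* Main.v *)
Require Import Defs.
From Stdlib Require Import Reals Lra Psatz IndefiniteDescription Classical.
Open Scope R_scope.

Definition e (n : nat) : R := / (INR n + 1).

Lemma e_pos n : 0 < e n.
Proof. unfold e. apply Rinv_0_lt_compat. pose proof (pos_INR n). lra. Qed.

Lemma e_le1 n : e n <= 1.
Proof. unfold e. pose proof (pos_INR n). rewrite <- Rinv_1. apply Rinv_le_contravar; lra. Qed.

Lemma e_mono n k : (n <= k)%nat -> e k <= e n.
Proof. intros H. unfold e. apply Rinv_le_contravar. pose proof (pos_INR n). lra.
  apply le_INR in H. lra. Qed.

Lemma e_small r : 0 < r -> exists N, e N < r.
Proof. intros Hr. destruct (archimed_cor1 r Hr) as [N [H1 H2]]. exists N. unfold e.
  apply Rle_lt_trans with (/ INR N); auto. apply Rinv_le_contravar.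
  apply lt_0_INR; lia. lra. Qed.

Lemma cauchy_crit {X : Type} (d : X -> X -> R) (u : nat -> X) (C : R) :
  is_metric d -> 0 <= C ->
  (forall n k, d (u n) (u k) ^ 2 <= C * (e n + e k)) -> is_cauchy d u.
Proof.
  intros [Hpos _] HC H eps Heps.
  assert (Hr : 0 < eps^2 / (2*C+2)). { apply Rdiv_lt_0_compat; nra. }
  destruct (e_small _ Hr) as [N HN]. exists N. intros m n Hm Hn.
  pose proof (e_mono _ _ Hm). pose proof (e_mono _ _ Hn).
  pose proof (H m n). pose proof (Hpos (u m) (u n)).
  assert (C * (e m + e n) <= C * (2 * (eps^2/(2*C+2)))) by (apply Rmult_le_compat_l; lra).
  assert (C * (2 * (eps^2/(2*C+2))) < eps^2).
  { unfold Rdiv. replace (C * (2 * (eps ^ 2 * / (2 * C + 2)))) with (eps^2 * (C / (C+1))) by (field; lra).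
    assert (C / (C+1) < 1). { apply Rmult_lt_reg_r with (C+1). lra. unfold Rdiv. rewrite Rmult_assoc, Rinv_l; lra. }
    assert (0 < eps^2) by nra.
    set (q := C/(C+1)) in *. clearbody q.
    apply Rlt_le_trans with (eps^2 * 1). apply Rmult_lt_compat_l; lra. lra. }
  nra.
Qed.

Lemma limit_min {X : Type} (d : X -> X -> R) (g : X -> R) (u : nat -> X) (l : X) (m : R) :
  is_metric d -> lsc d g -> converges_to d u l -> (forall n, g (u n) < m + e n) -> g l <= m.
Proof.
  intros [_ [_ [Hsym _]]] Hl Hc Hu.
  destruct (Rle_lt_dec (g l) m) as [H|H]; auto. exfalso.
  destruct (Hl l ((g l - m)/2)) as [delta [Hd Hy]]; [lra|].
  destruct (Hc delta Hd) as [N1 HN1].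
  destruct (e_small ((g l - m)/2)) as [N2 HN2]; [lra|].
  pose (n := max N1 N2).
  assert (h1 := HN1 n ltac:(lia)). rewrite Hsym in h1.
  pose proof (Hy _ h1). pose proof (Hu n). pose proof (e_mono N2 n ltac:(lia)). lra.
Qed.

Lemma exists_min {X : Type} (d : X -> X -> R) (g : X -> R) (u : nat -> X) (m : R) :
  is_metric d -> complete d -> lsc d g -> (forall y, m <= g y) -> is_cauchy d u ->
  (forall n, g (u n) < m + e n) -> exists z, forall w, g z <= g w.
Proof.
  intros Hm Hcomp Hl Hlb Hc Hu. destruct (Hcomp u Hc) as [l Hl'].
  exists l. intros w. pose proof (limit_min d g u l m Hm Hl Hl' Hu). pose proof (Hlb w). lra.
Qed.

Lemma inf_exists {X : Type} (g : X -> R) (x0 : X) (lb : R) :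
  (forall y, lb <= g y) -> exists m, (forall y, m <= g y) /\
     forall eps, 0 < eps -> exists z, g z < m + eps.
Proof.
  intros Hlb.
  destruct (completeness (fun r => exists y, r = - g y)) as [m' [Hub Hleast]].
  { exists (- lb). intros r [y ->]. pose proof (Hlb y). lra. }
  { exists (- g x0). eauto. }
  exists (- m'). split.
  - intros y. assert (- g y <= m') by (apply Hub; eauto). lra.
  - intros eps Heps. apply NNPP. intros Hn.
    assert (m' <= m' - eps).
    { apply Hleast. intros r [y ->]. destruct (Rlt_le_dec (g y) (- m' + eps)) as [h|h].
      - exfalso. apply Hn. eauto.
      - lra. }
    lra.
Qed.

Lemma min_seq {X : Type} (g : X -> R) (m : R) :
  (forall eps, 0 < eps -> exists z, g z < m + eps) ->
  exists u : nat -> X, forall n, g (u n) < m + e n.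
Proof.
  intros H. apply (functional_choice (fun n z => g z < m + e n)).
  intros n. apply H, e_pos.
Qed.

Lemma g_lsc {X : Type} (d : X -> X -> R) (f : X -> R) (x : X) (tau : R) :
  is_metric d -> 0 < tau -> lsc d f -> lsc d (fun y => f y + d x y ^ 2 / (2 * tau)).
Proof.
  intros [Hpos [_ [Hsym Htri]]] Ht Hf y0 eps Heps.
  destruct (Hf y0 (eps/2)) as [d1 [Hd1 H1]]; [lra|].
  assert (Ha : 0 <= d x y0) by apply Hpos.
  remember (d x y0) as a eqn:Ea.
  remember (eps * tau / (2 * (a + 1))) as d2 eqn:Ed2.
  assert (Hd2 : 0 < d2). { rewrite Ed2. apply Rdiv_lt_0_compat; nra. }
  assert (Hk2 : a * d2 / tau <= eps/2).
  { rewrite Ed2. unfold Rdiv. replace (a * (eps * tau * / (2 * (a + 1))) * / tau) with (eps/2 * (a / (a+1))) by (field; lra).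
    assert (a/(a+1) <= 1). { apply Rmult_le_reg_r with (a+1). lra. unfold Rdiv. rewrite Rmult_assoc, Rinv_l; lra. }
    assert (0 <= eps/2) by lra.
    set (q := a/(a+1)) in *. clearbody q. nra. }
  exists (Rmin d1 d2). split. { apply Rmin_pos; auto. }
  intros y Hy. pose proof (Rmin_l d1 d2). pose proof (Rmin_r d1 d2).
  specialize (H1 y ltac:(lra)).
  assert (Hb : 0 <= d x y) by apply Hpos. assert (He : 0 <= d y0 y) by apply Hpos.
  assert (Htr : a <= d x y + d y0 y). { rewrite Ea, (Hsym y0 y). apply Htri. }
  remember (d x y) as b eqn:Eb. remember (d y0 y) as eta eqn:Eeta.
  assert (Hsq : a^2 - 2*a*eta <= b^2).
  { destruct (Rle_lt_dec 0 (a - eta)).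
    - assert ((a-eta)*(a-eta) <= b*b) by (apply Rmult_le_compat; lra). nra.
    - nra. }
  assert (Hk : a * eta <= a * d2) by (apply Rmult_le_compat_l; lra).
  assert (a ^ 2 / (2*tau) - b^2/(2*tau) <= eps/2).
  { assert (E2 : a ^ 2 / (2*tau) - b^2/(2*tau) = (a^2 - b^2) / (2*tau)) by (field; lra).
    rewrite E2. apply Rle_trans with (2*a*d2/(2*tau)).
    - unfold Rdiv. apply Rmult_le_compat_r. left; apply Rinv_0_lt_compat; lra. nra.
    - replace (2 * a * d2 / (2 * tau)) with (a * d2 / tau) by (field; lra). lra. }
  lra.
Qed.

Lemma mid_cat0 {X : Type} (d : X -> X -> R) x y z gamma :
  CAT0 d -> min_geodesic d y z gamma ->
  d x (gamma (/2)) ^ 2 <= /2 * d x y ^ 2 + /2 * d x z ^ 2 - /4 * d y z ^ 2.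
Proof.
  intros [_ H] Hg. specialize (H x y z gamma Hg (/2) ltac:(lra)).
  replace ((1 - /2) * /2) with (/4) in H by field.
  replace (1 - /2) with (/2) in H by field. exact H.
Qed.

Lemma cauchy_case1 {X : Type} (d : X -> X -> R) (f : X -> R) x tau m l (w : nat -> X) :
  CAT0 d -> quasi_convex d f -> 0 < tau ->
  (forall y, m <= f y + d x y ^ 2 / (2 * tau)) ->
  (forall n, Rabs (f (w n) - l) < e n) ->
  (forall n, f (w n) + d x (w n) ^ 2 / (2 * tau) < m + e n) ->
  forall n k, d (w n) (w k) ^ 2 <= 8 * tau * (e n + e k).
Proof.
  intros Hc Hq Ht Hm Hl Hw n k.
  destruct (proj1 Hc (w n) (w k)) as [g Hg].
  pose proof (mid_cat0 d x _ _ g Hc Hg) as Hcat.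
  pose proof (Hq _ _ g Hg (/2) ltac:(lra)) as Hqc.
  pose proof (Hm (g (/2))) as Hmid.
  pose proof (Hw n) as Hn. pose proof (Hw k) as Hk.
  pose proof (Hl n) as Ln. pose proof (Hl k) as Lk.
  unfold Rdiv in *.
  assert (Hit : 0 < / (2 * tau)) by (apply Rinv_0_lt_compat; lra).
  assert (Hit2 : / (2 * tau) * (2 * tau) = 1) by (field; lra).
  remember (/ (2 * tau)) as it.
  remember (d x (g (/2)) ^ 2) as A. remember (d x (w n) ^ 2) as B.
  remember (d x (w k) ^ 2) as C. remember (d (w n) (w k) ^ 2) as D.
  assert (HA : A * it <= /2 * (B * it) + /2 * (C * it) - /4 * (D * it)) by nra.
  assert (Hmax : Rmax (f (w n)) (f (w k)) <= (f (w n) + f (w k))/2 + (e n + e k)/2).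
  { apply Rabs_def2 in Ln. apply Rabs_def2 in Lk.
    unfold Rmax; destruct (Rle_dec (f (w n)) (f (w k))); lra. }
  assert (HD : D * it <= 4 * (e n + e k)) by lra.
  assert (D = D * it * (2 * tau)) by nra.
  nra.
Qed.

Lemma cauchy_case2 {X : Type} (d : X -> X -> R) (f : X -> R) x tau lam m (w : nat -> X) :
  CAT0 d -> lambda_convex d lam f -> 0 < tau -> 0 < lam + / tau ->
  (forall y, m <= f y + d x y ^ 2 / (2 * tau)) ->
  (forall n, f (w n) + d x (w n) ^ 2 / (2 * tau) < m + e n) ->
  forall n k, d (w n) (w k) ^ 2 <= (4 / (lam + / tau)) * (e n + e k).
Proof.
  intros Hc Hlc Ht Hk0 Hm Hw n k.
  destruct (proj1 Hc (w n) (w k)) as [g Hg].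
  pose proof (mid_cat0 d x _ _ g Hc Hg) as Hcat.
  pose proof (Hlc _ _ g Hg (/2) ltac:(lra)) as Hqc.
  pose proof (Hm (g (/2))) as Hmid.
  pose proof (Hw n) as Hn. pose proof (Hw k) as Hk.
  pose proof (e_pos n). pose proof (e_pos k).
  unfold Rdiv in *.
  assert (Hit : 0 < / (2 * tau)) by (apply Rinv_0_lt_compat; lra).
  assert (Hit2 : / tau = 2 * / (2 * tau)) by (field; lra).
  rewrite Hit2 in Hk0 |- *.
  assert (Hik : 0 < / (lam + 2 * / (2*tau))) by (apply Rinv_0_lt_compat; lra).
  assert (Hik2 : / (lam + 2 * / (2*tau)) * (lam + 2 * / (2*tau)) = 1) by (apply Rinv_l; lra).
  remember (/ (lam + 2 * / (2*tau))) as ik.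
  remember (/ (2 * tau)) as it.
  remember (d x (g (/2)) ^ 2) as A. remember (d x (w n) ^ 2) as B.
  remember (d x (w k) ^ 2) as C. remember (d (w n) (w k) ^ 2) as D.
  replace ((1 - /2) * f (w n) + /2 * f (w k) - lam * /2 * (1 - /2) * /2 * D)
    with (/2 * f (w n) + /2 * f (w k) - lam / 8 * D) in Hqc by field.
  assert (HA : A * it <= /2 * (B * it) + /2 * (C * it) - /4 * (D * it)) by nra.
  assert (HD : (lam + 2 * it) * D <= 4 * (e n + e k)) by lra.
  assert (D = ik * ((lam + 2 * it) * D)) by nra.
  nra.
Qed.

Lemma unique_case2 {X : Type} (d : X -> X -> R) (f : X -> R) x tau lam z z' :
  is_metric d -> CAT0 d -> lambda_convex d lam f -> 0 < tau -> 0 < lam + / tau ->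
  J_tau d f tau x z -> J_tau d f tau x z' -> z' = z.
Proof.
  intros Hmet Hc Hlc Ht Hk0 Hz Hz'.
  destruct (proj1 Hc z z') as [g Hg].
  pose proof (mid_cat0 d x _ _ g Hc Hg) as Hcat.
  pose proof (Hlc _ _ g Hg (/2) ltac:(lra)) as Hqc.
  pose proof (Hz (g (/2))) as Hmid. pose proof (Hz' z) as H1.
  unfold Rdiv in *.
  assert (Hit : 0 < / (2 * tau)) by (apply Rinv_0_lt_compat; lra).
  assert (Hit2 : / tau = 2 * / (2 * tau)) by (field; lra).
  rewrite Hit2 in Hk0.
  assert (HD0 : 0 <= d z z') by apply Hmet.
  assert (Hsq : d z z' ^ 2 <= 0).
  { remember (/ (2 * tau)) as it.
    remember (d x (g (/2)) ^ 2) as A. remember (d x z ^ 2) as B.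
    remember (d x z' ^ 2) as C. remember (d z z' ^ 2) as D.
    replace ((1 - /2) * f z + /2 * f z' - lam * /2 * (1 - /2) * /2 * D)
      with (/2 * f z + /2 * f z' - lam / 8 * D) in Hqc by field.
    assert (HA : A * it <= /2 * (B * it) + /2 * (C * it) - /4 * (D * it)) by nra.
    assert (HD : (lam + 2 * it) * D <= 0) by lra.
    assert (0 <= D) by (rewrite HeqD; nra).
    nra. }
  assert (d z z' = 0) by nra.
  symmetry. apply (proj1 (proj2 Hmet)). auto.
Qed.

Lemma lower_case2 {X : Type} (d : X -> X -> R) (f : X -> R) x tau lam :
  is_metric d -> geodesic_space d -> lsc d f -> lambda_convex d lam f ->
  lam < 0 -> 0 < tau -> 0 < lam + / tau ->
  exists lb, forall y, lb <= f y + d x y ^ 2 / (2 * tau).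
Proof.
  intros Hmet Hgeo Hl Hlc Hlam Ht Hk.
  destruct (Hl x 1 ltac:(lra)) as [delta [Hd Hf]].
  assert (Hit : 0 < / (2 * tau)) by (apply Rinv_0_lt_compat; lra).
  assert (Hit2 : / tau = 2 * / (2 * tau)) by (field; lra).
  rewrite Hit2 in Hk.
  remember (/ (2 * tau)) as it.
  remember (lam + 2 * it) as kap.
  assert (Hik : 0 < / (2 * kap)) by (apply Rinv_0_lt_compat; lra).
  assert (Hik2 : / (2 * kap) * (2 * kap) = 1) by (apply Rinv_l; lra).
  remember (/ (2*kap)) as ik.
  assert (Ha : 0 < / delta) by (apply Rinv_0_lt_compat; lra).
  assert (Ha2 : / delta * delta = 1) by (apply Rinv_l; lra).
  remember (/ delta) as ia.
  exists (f x - 1 - (2*ia) * (2*ia) * ik).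
  intros y. unfold Rdiv. rewrite <- Heqit.
  assert (HD0 : 0 <= d x y) by apply Hmet.
  assert (Hq : 0 <= (2*ia) * (2*ia) * ik) by (apply Rmult_le_pos; nra).
  destruct (Rlt_le_dec (d x y) delta) as [Hlt|Hge].
  - specialize (Hf y Hlt). assert (0 <= d x y ^ 2 * it) by nra. lra.
  - destruct (Hgeo x y) as [g Hgg]. pose proof Hgg as [Hg0 [Hg1 Hgd]].
    remember (d x y) as D.
    assert (HDp : 0 < D) by lra.
    assert (HiD : / D * D = 1) by (apply Rinv_l; lra).
    assert (HiDp : 0 < / D) by (apply Rinv_0_lt_compat; lra).
    set (t := delta / 2 * / D).
    assert (Htpos : 0 < t) by (unfold t; nra).
    assert (HtD : t * D = delta / 2).
    { unfold t. rewrite Rmult_assoc, HiD. lra. }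
    assert (Ht1 : t <= /2) by (clearbody t; nra).
    assert (Hdist : d x (g t) = t * D).
    { pose proof (Hgd 0 t ltac:(lra) ltac:(lra)) as E. rewrite Hg0 in E. rewrite E.
      rewrite Rminus_0_r, Rabs_pos_eq by lra. rewrite HeqD. reflexivity. }
    assert (Hft : f x - 1 < f (g t)) by (apply Hf; lra).
    pose proof (Hlc x y g Hgg t ltac:(lra)) as Hc.
    rewrite <- HeqD in Hc.
    clearbody t.
    assert (HtaD : t * (2*ia) * D = 1) by nra.
    assert (Hp : 0 <= - lam * (t*t*(D*D))) by (apply Rmult_le_pos; nra).
    assert (Hy : t * (f y - f x + 2*ia*D - lam/2 * D^2) >= 0).
    { unfold Rdiv in *. ring_simplify. ring_simplify in Hc. ring_simplify in HtaD. ring_simplify in Hp. lra. }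
    assert (Hy2 : f y - f x + 2*ia*D - lam/2 * D^2 >= 0).
    { destruct (Rlt_le_dec (f y - f x + 2*ia*D - lam/2 * D^2) 0) as [h|h]; [|lra].
      assert (t * (f y - f x + 2*ia*D - lam/2 * D^2) < t * 0) by (apply Rmult_lt_compat_l; lra). lra. }
    assert (Hsq : 0 <= (kap * D - 2*ia)^2 * ik) by (apply Rmult_le_pos; [apply pow2_ge_0 | lra]).
    assert (Hkik : kap * ik = /2) by (replace (kap * ik) with (/2 * (ik * (2 * kap))) by field; rewrite Hik2; ring).
    replace ((kap * D - 2*ia)^2 * ik) with ((kap*ik)*(kap*D^2) - 4*ia*D*(kap*ik) + 4*ia*ia*ik) in Hsq by ring.
    rewrite Hkik in Hsq. rewrite Heqkap in Hsq. unfold Rdiv in Hy2. lra.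
Qed.

Theorem mainTheorem11 (X : Type) (d : X -> X -> R) (f : X -> R) :
  is_metric d -> complete d -> CAT0 d ->
  lsc d f -> quasi_convex d f ->
  ((exists m, forall y, m <= f y) ->
     forall x tau, 0 < tau -> exists z, J_tau d f tau x z) /\
  (forall lam, lam < 0 -> lambda_convex d lam f ->
     forall x tau, 0 < tau -> tau < / (- lam) ->
       exists z, J_tau d f tau x z /\ forall z', J_tau d f tau x z' -> z' = z).
Proof.
  intros Hmet Hcomp Hcat Hl Hq. split.
  - intros [m0 Hm0] x tau Ht.
    set (g := fun y => f y + d x y ^ 2 / (2 * tau)).
    assert (Hsq : forall y, 0 <= d x y ^ 2 / (2 * tau)).
    { intros y. unfold Rdiv. apply Rmult_le_pos. apply pow2_ge_0.
      left; apply Rinv_0_lt_compat; lra. }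
    destruct (inf_exists g x m0) as [m [Hm Hinf]].
    { intros y. unfold g. pose proof (Hm0 y). pose proof (Hsq y). lra. }
    destruct (min_seq g m Hinf) as [u Hu].
    destruct (Bolzano_Weierstrass (fun n => f (u n)) (fun c => m0 <= c <= m + 1)
               (compact_P3 _ _)) as [l Hl'].
    { intros n. split. apply Hm0. pose proof (Hu n). pose proof (e_le1 n).
      pose proof (Hsq (u n)). unfold g in *. lra. }
    assert (Hw : forall k, exists z, Rabs (f z - l) < e k /\ g z < m + e k).
    { intros k. destruct (Hl' (disc l (mkposreal _ (e_pos k))) k) as [p [Hp Hv]].
      { exists (mkposreal _ (e_pos k)). intros y Hy. exact Hy. }
      exists (u p). split. exact Hv. pose proof (Hu p). pose proof (e_mono _ _ Hp). lra. }
    destruct (functional_choice _ Hw) as [w Hw'].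
    assert (Hc : is_cauchy d w).
    { apply (cauchy_crit d w (8 * tau) Hmet ltac:(lra)).
      apply (cauchy_case1 d f x tau m l w Hcat Hq Ht Hm).
      intros n; apply Hw'. intros n; apply Hw'. }
    destruct (exists_min d g w m Hmet Hcomp (g_lsc d f x tau Hmet Ht Hl) Hm Hc
                (fun n => proj2 (Hw' n))) as [z Hz].
    exists z. intros v. apply (Hz v).
  - intros lam Hlam Hlc x tau Ht Htl.
    assert (Hk : 0 < lam + / tau).
    { assert (/ (/ (- lam)) < / tau). { apply Rinv_lt_contravar; auto.
        apply Rmult_lt_0_compat; auto. apply Rinv_0_lt_compat; lra. }
      rewrite Rinv_inv in H. lra. }
    set (g := fun y => f y + d x y ^ 2 / (2 * tau)).
    destruct (lower_case2 d f x tau lam Hmet (proj1 Hcat) Hl Hlc Hlam Ht Hk) as [lb Hlb].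
    destruct (inf_exists g x lb Hlb) as [m [Hm Hinf]].
    destruct (min_seq g m Hinf) as [u Hu].
    assert (Hc : is_cauchy d u).
    { apply (cauchy_crit d u (4 / (lam + / tau)) Hmet).
      { unfold Rdiv. apply Rmult_le_pos. lra. left; apply Rinv_0_lt_compat; lra. }
      apply (cauchy_case2 d f x tau lam m u Hcat Hlc Ht Hk Hm Hu). }
    destruct (exists_min d g u m Hmet Hcomp (g_lsc d f x tau Hmet Ht Hl) Hm Hc Hu)
      as [z Hz].
    exists z. split.
    + intros v. apply (Hz v).
    + intros z' Hz'. apply (unique_case2 d f x tau lam z z' Hmet Hcat Hlc Ht Hk); auto.
Qed.
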